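(* For $i\in\{1,\dots,n\}$ let $g_i:\mathbb{R}\to]-\infty,+\infty]$ be proper, lower semicontinuous and convex, and define $g:\mathbb{R}^n\to]-\infty,+\infty]$ by $g(x)=\sum_{i=1}^n g_i(x_i)$. Then for every $\alpha>0$ and every $\eta\in\mathbb{R}^n_{>0}$, both $\mathrm{prox}_{\alpha g}$ (which equals the resolvent $J_{\alpha\partial g}=(\mathrm{Id}+\alpha\partial g)^{-1}$) and $2\,\mathrm{prox}_{\alpha g}-\mathrm{Id}$ (which equals $R_{\alpha\partial g}=2J_{\alpha\partial g}-\mathrm{Id}$) are nonexpansive with respect to $\|\cdot\|_{\infty,[\eta]^{-1}}$, i.e., $\|T(x)-T(y)\|_{\infty,[\eta]^{-1}}\le\|x-y\|_{\infty,[\eta]^{-1}}$ for all $x,y$ for each of these maps $T$.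
   Context: For a proper lower semicontinuous convex $h:\mathbb{R}^n\to]-\infty,+\infty]$, the proximal operator is $\mathrm{prox}_h(x)=\arg\min_{z\in\mathbb{R}^n}\tfrac12\|x-z\|_2^2+h(z)$ (single-valued), and $\partial h$ denotes the subdifferential. For $\eta\in\mathbb{R}^n_{>0}$, $\|x\|_{\infty,[\eta]^{-1}}=\max_i|x_i|/\eta_i$. *)

(* Defs.v *)
From HB Require Import structures.
From mathcomp Require Import all_boot all_order all_algebra.
From mathcomp Require Import all_classical all_reals all_analysis.
Set Implicit Arguments. Unset Strict Implicit. Unset Printing Implicit Defensive.
Import Order.TTheory GRing.Theory Num.Theory.
Import numFieldNormedType.Exports.
Local Open Scope ring_scope.

Definition proper_fun (R : realType) (f : R -> \bar R) : Prop :=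
  (forall x, f x <> -oo%E) /\ (exists x, (f x < +oo)%E).

Definition convex_ext (R : realType) (f : R -> \bar R) : Prop :=
  forall (x y t : R), 0 < t < 1 ->
    (f (t * x + (1 - t) * y)%R <= t%:E * f x + (1 - t)%R%:E * f y)%E.

Definition sep_sum (R : realType) (n : nat) (g : 'I_n -> R -> \bar R)
  (x : 'I_n -> R) : \bar R := (\sum_(i < n) g i (x i))%E.

Definition is_prox (R : realType) (n : nat) (h : ('I_n -> R) -> \bar R)
  (x z : 'I_n -> R) : Prop :=
  forall w : 'I_n -> R,
    ((2^-1 * \sum_(i < n) (x i - z i) ^+ 2)%:E + h z
     <= (2^-1 * \sum_(i < n) (x i - w i) ^+ 2)%:E + h w)%E.

Definition winf_norm (R : realType) (n : nat) (eta x : 'I_n -> R) : R :=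
  \big[Num.max/0]_(i < n) (`|x i| / eta i).

(* Main.v *)
Require Import Defs.
From HB Require Import structures.
From mathcomp Require Import all_boot all_order all_algebra.
From mathcomp Require Import all_classical all_reals all_analysis.
From mathcomp Require Import lra ring.
Import Order.TTheory GRing.Theory Num.Theory.
Import numFieldNormedType.Exports.
Local Open Scope ring_scope.

Lemma lim_small (R : realType) (a b c : R) : 0 <= c ->
  (forall t, 0 < t < 1 -> a <= b + t * c) -> a <= b.
Proof.
move=> c0 H; rewrite leNgt; apply/negP => ba.
have e0 : 0 < a - b by rewrite subr_gt0.
have s0 : 0 < 2 * (a - b + c) by nra.
set t := (a - b) / (2 * (a - b + c)).
have t0 : 0 < t by rewrite divr_gt0.
have ht : t * (2 * (a - b + c)) = a - b by rewrite /t mulfVK // gt_eqF.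
have t1 : t < 1 by nra.
have := H t (introT andP (conj t0 t1)).
nra.
Qed.

Lemma prox1 (R : realType) (f : R -> \bar R) (alpha x p : R) :
  0 < alpha -> (forall u, f u <> -oo%E) -> convex_ext f -> f p \is a fin_num ->
  (forall z, f z \is a fin_num ->
     (x - p) ^+ 2 / 2 + alpha * fine (f p) <= (x - z) ^+ 2 / 2 + alpha * fine (f z)) ->
  forall w, f w \is a fin_num -> (x - p) * (w - p) <= alpha * (fine (f w) - fine (f p)).
Proof.
move=> ha hninf hc hp hmin w hw.
apply: (@lim_small _ _ _ ((w - p) ^+ 2 / 2)); first by rewrite divr_ge0 // sqr_ge0.
move=> t /andP[t0 t1].
have hz := hc w p t (introT andP (conj t0 t1)).
set z := t * w + (1 - t) * p.
rewrite -/z in hz.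
have fz : f z \is a fin_num.
  rewrite fin_numE; apply/andP; split; first by apply/eqP/hninf.
  rewrite lt_eqF //; apply: (le_lt_trans hz).
  by rewrite -(fineK hw) -(fineK hp) -!EFinM -EFinD ltry.
have hz' : fine (f z) <= t * fine (f w) + (1 - t) * fine (f p).
  by move: hz; rewrite -(fineK hw) -(fineK hp) -(fineK fz) -!EFinM -EFinD lee_fin.
have H1 : alpha * fine (f z) <= alpha * (t * fine (f w) + (1 - t) * fine (f p)).
  by rewrite ler_wpM2l // ltW.
have H0 := hmin z fz.
have H2 : t * ((x - p) * (w - p)) <= t * (alpha * (fine (f w) - fine (f p)) + t * ((w - p) ^+ 2 / 2)).
  rewrite /z in H0 H1; nra.
by rewrite ler_pM2l in H2.
Qed.
Lemma coord (R : realType) (n : nat) (g : 'I_n -> R -> \bar R) (alpha : R) (x px : 'I_n -> R) :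
  (forall i, proper_fun (g i)) -> 0 < alpha ->
  is_prox (fun z => (alpha%:E * sep_sum g z)%E) x px ->
  (forall j, g j (px j) \is a fin_num) /\
  (forall i z, g i z \is a fin_num ->
     (x i - px i) ^+ 2 / 2 + alpha * fine (g i (px i)) <= (x i - z) ^+ 2 / 2 + alpha * fine (g i z)).
Proof.
move=> hprop ha hmin.
have [u hu] : {u : 'I_n -> R & forall i, (g i (u i) < +oo)%E}.
  by apply: (@boolp.choice _ _ (fun i v => (g i v < +oo)%E)) => i; case: (hprop i).
have ufin : forall i, g i (u i) \is a fin_num.
  by move=> i; rewrite fin_numE; apply/andP; split; [apply/eqP; case: (hprop i) | rewrite lt_eqF].
have pfin : forall j, g j (px j) \is a fin_num.
  move=> j; rewrite fin_numE; apply/andP; split; first by apply/eqP; case: (hprop j).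
  apply/negP => /eqP gj.
  have S : sep_sum g px = +oo%E.
    apply/esum_eqyP; first by move=> k _; apply/eqP; case: (hprop k).
    by exists j; split => //; rewrite mem_index_enum.
  have := hmin u; rewrite S gt0_muley ?lte_fin // addey //.
  by rewrite /sep_sum -(EFin_sum_fine _ (fun i _ => ufin i)) -EFinM -EFinD leye_eq.
split => // i z hz.
pose w := fun j => if j == i then z else px j.
have wfin : forall j, g j (w j) \is a fin_num.
  by move=> j; rewrite /w; case: eqP => [->|].
have := hmin w.
rewrite /sep_sum -(EFin_sum_fine _ (fun i _ => pfin i)) -(EFin_sum_fine _ (fun i _ => wfin i)).
rewrite -!EFinM -!EFinD lee_fin.
have E1 : \sum_(j < n) (x j - w j) ^+ 2 = (x i - z) ^+ 2 + \sum_(j < n | j != i) (x j - px j) ^+ 2.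
  rewrite (bigD1 i) //= /w eqxx; congr (_ + _); apply: eq_bigr => j /negbTE -> //.
have E2 : \sum_(j < n) fine (g j (w j)) = fine (g i z) + \sum_(j < n | j != i) fine (g j (px j)).
  rewrite (bigD1 i) //= /w eqxx; congr (_ + _); apply: eq_bigr => j /negbTE -> //.
have E3 : \sum_(j < n) (x j - px j) ^+ 2 = (x i - px i) ^+ 2 + \sum_(j < n | j != i) (x j - px j) ^+ 2.
  by rewrite (bigD1 i).
have E4 : \sum_(j < n) fine (g j (px j)) = fine (g i (px i)) + \sum_(j < n | j != i) fine (g j (px j)).
  by rewrite (bigD1 i).
rewrite E1 E2 E3 E4.
nra.
Qed.
Lemma sq_aux (R : realType) (a b : R) : a ^+ 2 <= a * b ->
  `|a| <= `|b| /\ `|2 * a - b| <= `|b|.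
Proof.
move=> h; rewrite !ler_norml.
case: (lerP 0 b) => hb; [rewrite ger0_norm // | rewrite ltr0_norm //].
  have h1 : 0 <= a by nra.
  have h2 : a <= b by nra.
  split; apply/andP; split; lra.
have h1 : a <= 0 by nra.
have h2 : b <= a by nra.
split; apply/andP; split; lra.
Qed.
Lemma winf_mono (R : realType) n (eta a b : 'I_n -> R) : (forall i, 0 < eta i) ->
  (forall i, `|a i| <= `|b i|) -> winf_norm eta a <= winf_norm eta b.
Proof.
move=> he hab; rewrite /winf_norm; elim/big_ind2: _ => //.
  by move=> x1 x2 y1 y2 h1 h2; rewrite ge_max !le_max h1 h2 !orbT.
move=> i _; rewrite ler_wpM2r // invr_ge0 ltW //.
Qed.

Theorem proposition41 (R : realType) (n : nat) (g : 'I_n -> R -> \bar R) :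
  (forall i, proper_fun (g i)) ->
  (forall i, lower_semicontinuous (g i)) ->
  (forall i, convex_ext (g i)) ->
  forall (alpha : R) (eta : 'I_n -> R), 0 < alpha -> (forall i, 0 < eta i) ->
  forall x y px py : 'I_n -> R,
    is_prox (fun z => (alpha%:E * sep_sum g z)%E) x px ->
    is_prox (fun z => (alpha%:E * sep_sum g z)%E) y py ->
    winf_norm eta (px - py) <= winf_norm eta (x - y) /\
    winf_norm eta ((2 *: px - x) - (2 *: py - y)) <= winf_norm eta (x - y).
Proof.
move=> hprop _ hconv alpha eta ha he x y px py hx hy.
have [fx mx] := @coord _ _ _ _ _ _ hprop ha hx.
have [fy my] := @coord _ _ _ _ _ _ hprop ha hy.
have key : forall i, `|px i - py i| <= `|x i - y i| /\
                     `|2 * px i - x i - (2 * py i - y i)| <= `|x i - y i|.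
  move=> i.
  have hn : forall u, g i u <> -oo%E by case: (hprop i).
  have h1 := @prox1 _ _ _ _ _ ha hn (hconv i) (fx i) (mx i) (py i) (fy i).
  have h2 := @prox1 _ _ _ _ _ ha hn (hconv i) (fy i) (my i) (px i) (fx i).
  have := @sq_aux R (px i - py i) (x i - y i).
  have -> : 2 * px i - x i - (2 * py i - y i) = 2 * (px i - py i) - (x i - y i) by ring.
  apply; nra.
split; apply: winf_mono => // i; have [k1 k2] := key i => //.
Qed.
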